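(* Assume the setting described in the context. Suppose that either (1) there are vectors $\lambda,\mu\in\mathbb{R}^F$ with $\mu_f\neq0$ and a constant $\theta\in(0,1)$ such that $\frac{\lambda_f}{\mu_f}\sum_{S\in\mathrm{Ind}(\Gamma(f))}\mu(S)\le\theta$ for all $f\in F$, where $\mu(S)=\prod_{g\in S}\mu_g$; or (2) $(\rho,\sim)$ satisfies Shearer's condition with vectors $p,\lambda$ and constant $\theta$, in which case $\mu(R):=q_R(p)/q_\varnothing(p)$. Then for every $R\in\mathrm{Ind}(F)$ and integer $t\ge0$, $$\sum_{\varphi\in\mathrm{Stab}(R,t)}\lambda_\varphi\le\mu(R)\,\theta^t.$$
   Context: Setting: $F$ is a finite set with a symmetric relation $\sim$ (loops $f\sim f$ allowed), and $\Gamma(f)=\{g\in F:f\sim g\}$, $\Gamma(S)=\bigcup_{f\in S}\Gamma(f)$. A set $S\subseteq F$ is independent if $f\not\sim g$ for all distinct $f,g\in S$; $\mathrm{Ind}(S)$ is the family of independent subsets of $S$. A sequence $\varphi=(I_1,\ldots,I_s)$ with $s\ge1$ is strongly stable if: (i) $I_r\in\mathrm{Ind}(F)$ for all $r$; (ii) $I_{r+1}\subseteq\Gamma(I_r)$ for $r\in[s-1]$; (iii) $I_r\neq\varnothing$ for $r\in[2,s]$. For such $\varphi$ let $R_\varphi=I_1$, $|\varphi|=\sum_r|I_r|$ and $\lambda_\varphi=\prod_r\prod_{f\in I_r}\lambda_f$. Let $\mathrm{Stab}(R,t)$ be the set of strongly stable sequences $\varphi$ with $R_\varphi=R$ and $|\varphi|\ge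 t$. Shearer's condition refers additionally to the following data: a finite set $\Omega$ in which the flaws $f\in F$ are nonempty subsets; probability distributions $\rho(\cdot\mid f,\sigma)$ with support $A(f,\sigma)$ for each $\sigma\in f$; and a distribution $\omega$ on $\Omega$ with $\omega>0$. Set $q_S(p)=\sum_{I:S\subseteq I\in\mathrm{Ind}(F)}(-1)^{|I|-|S|}\prod_{f\in I}p_f$. It requires $p\in\mathbb{R}^F$ with $q_S(p)\ge0$ for all $S\subseteq F$ and $q_\varnothing(p)>0$, a vector $\lambda$ with $\lambda_f\ge\sum_{\sigma\in f:\sigma'\in A(f,\sigma)}\rho(\sigma'\mid f,\sigma)\omega(\sigma)/\omega(\sigma')$ for all $f,\sigma'$, and $\theta\in(0,1)$ with $\lambda_f\le\theta p_f$ for all $f$. *)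

(* Defs.v *)
From HB Require Import structures.
From mathcomp Require Import all_boot all_order all_algebra.
From mathcomp Require Import all_classical all_reals.
From mathcomp Require Import ereal esum.
Set Implicit Arguments. Unset Strict Implicit. Unset Printing Implicit Defensive.
Import Order.TTheory GRing.Theory Num.Theory.
Local Open Scope ring_scope.

Section Defs.
Variable F : finType.
Variable sim : rel F. (* the symmetric relation ~ (loops allowed) *)

Definition symmetric_rel := forall f g : F, sim f g = sim g f.

Definition Gam (f : F) : {set F} := [set g | sim f g].
Definition GamS (S : {set F}) : {set F} := \bigcup_(f in S) Gam f.

Definition indep (S : {set F}) : bool :=
  [forall f in S, forall g in S, (f != g) ==> ~~ sim f g].

(* strongly stable sequence (I_1, ..., I_s), s >= 1, I_r = nth (@finset.set0 F) phi (r-1) *)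
Definition strongly_stable (phi : seq {set F}) : Prop :=
  [/\ (0 < size phi)%N,
      (forall r, (r < size phi)%N -> indep (nth (@finset.set0 F) phi r)),
      (forall r, (r.+1 < size phi)%N ->
          nth (@finset.set0 F) phi r.+1 \subset GamS (nth (@finset.set0 F) phi r)) &
      (forall r, (1 <= r < size phi)%N -> nth (@finset.set0 F) phi r != @finset.set0 F)].

Definition R_of (phi : seq {set F}) : {set F} := head (@finset.set0 F) phi.
Definition weight (phi : seq {set F}) : nat := sumn [seq #|J| | J : {set F} <- phi].

Definition Stab (R : {set F}) (t : nat) : set (seq {set F}) :=
  [set phi | strongly_stable phi /\ R_of phi = R /\ (t <= weight phi)%N].

Variable Rl : realType.

Definition lam_seq (lam : F -> Rl) (phi : seq {set F}) : Rl :=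
  \prod_(J <- phi) \prod_(f in J) lam f.

Definition mu_prod (mu : F -> Rl) (S : {set F}) : Rl := \prod_(g in S) mu g.

Definition q (p : F -> Rl) (S : {set F}) : Rl :=
  \sum_(J : {set F} | indep J && (S \subset J))
     (-1) ^+ (#|J| - #|S|) * \prod_(f in J) p f.

End Defs.

Definition case1 (F : finType) (sim : rel F) (Rl : realType)
    (lam mu : F -> Rl) (theta : Rl) : Prop :=
  [/\ 0 < theta < 1,
      (forall f, 0 <= lam f),
      (forall f, 0 < mu f) &
      (forall f, lam f / mu f *
         (\sum_(S : {set F} | (S \subset Gam sim f) && indep sim S) mu_prod mu S)
         <= theta)].

(* Omega : finite set; flaws are (pairwise distinct) nonempty subsets fl f of Omega;
   rho f sigma is a probability distribution on Omega for each sigma in fl f,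
   with support A(f,sigma) = {sigma' | rho f sigma sigma' > 0};
   omega is a distribution on Omega with omega > 0. *)
Definition shearer (F : finType) (sim : rel F) (Rl : realType)
    (Omega : finType) (fl : F -> {set Omega})
    (rho : F -> Omega -> Omega -> Rl) (omega : Omega -> Rl)
    (p lam : F -> Rl) (theta : Rl) : Prop :=
  [/\ injective fl /\ (forall f, fl f != @finset.set0 Omega),
      (forall f sigma, sigma \in fl f ->
         (forall s', 0 <= rho f sigma s') /\ \sum_(s' : Omega) rho f sigma s' = 1),
      (forall s, 0 < omega s) /\ \sum_(s : Omega) omega s = 1,
      (forall S : {set F}, 0 <= q sim p S) /\ 0 < q sim p (@finset.set0 F) &
      ((forall f (s' : Omega),
         \sum_(sigma in fl f | 0 < rho f sigma s')
            rho f sigma s' * omega sigma / omega s' <= lam f) /\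
       (0 < theta < 1) /\ (forall f, lam f <= theta * p f))].

(* Main.v *)
Require Import Defs.
From HB Require Import structures.
From mathcomp Require Import all_boot all_order all_algebra.
From mathcomp Require Import all_classical all_reals.
From mathcomp Require Import ereal esum.
From mathcomp Require Import ring lra.
Import Order.TTheory GRing.Theory Num.Theory.
Local Open Scope ring_scope.
Set Implicit Arguments. Unset Strict Implicit. Unset Printing Implicit Defensive.

Section Main.
Variables (F : finType) (sim : rel F) (Rl : realType) (lam : F -> Rl)
  (theta : Rl) (muS : {set F} -> Rl).
Hypotheses (lam0 : forall f, 0 <= lam f) (th0 : 0 <= theta) (th1 : theta <= 1)
  (mu_empty : muS (@finset.set0 F) = 1) (mu0 : forall T, indep sim T -> 0 <= muS T)
  (keyineq : forall R, indep sim R ->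
     \prod_(f in R) lam f *
       \sum_(T : {set F} | indep sim T && (T \subset GamS sim R)) muS T
     <= theta ^+ #|R| * muS R).

Lemma ss_behead (R : {set F}) psi : strongly_stable sim (R :: psi) ->
  (0 < size psi)%N -> strongly_stable sim psi.
Proof.
case=> _ hi hs hn hp; split=> // r hr.
- exact: (hi r.+1).
- exact: (hs r.+1).
- by move/andP: hr => [h1 h2]; apply: (hn r.+1).
Qed.

Lemma partition_seq (I : eqType) (K : finType) (X : seq I) (P : pred I)
   (key : I -> K) (V : pred K) (g : I -> Rl) :
  (forall i, i \in X -> P i -> V (key i)) ->
  \sum_(i <- X | P i) g i =
  \sum_(k | V k) \sum_(i <- X | P i && (key i == k)) g i.
Proof.
move=> HV.
transitivity (\sum_(k | V k) \sum_(i <- X | P i) (if key i == k then g i else 0)).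
  rewrite exchange_big /= big_seq_cond [RHS]big_seq_cond.
  idtac.
  apply: eq_bigr => i /andP [iX Pi].
  rewrite -big_mkcondr /= (big_pred1 (key i)) // => k /=.
  rewrite eq_sym; case: eqP => [->|]; rewrite ?andbF // andbT; exact: HV.
by apply: eq_bigr => k _; rewrite big_mkcondr.
Qed.


Local Notation S0 := (@finset.set0 F).

Lemma lam_cons R psi : lam_seq lam (R :: psi) = \prod_(f in R) lam f * lam_seq lam psi.
Proof. by rewrite /lam_seq big_cons. Qed.

Lemma lam_seq_ge0 phi : 0 <= lam_seq lam phi.
Proof. by apply: prodr_ge0 => J _; apply: prodr_ge0. Qed.

Lemma weight_cons (R : {set F}) psi : weight (R :: psi) = (#|R| + weight psi)%N.
Proof. by []. Qed.

Lemma final_alg (LR A B Sp muR : Rl) (t n : nat) :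
  0 <= LR -> 0 <= muR -> 0 <= Sp ->
  A <= (if (t <= n)%N then LR else 0) ->
  B <= LR * (Sp * theta ^+ (t - n)) ->
  LR * (1 + Sp) <= theta ^+ n * muR ->
  A + B <= muR * theta ^+ t.
Proof.
move=> LR0 muR0 Sp0 hA hB hk.
case: (leqP t n) => htn.
- rewrite htn in hA; move: hB; rewrite (eqP (_ : t - n == 0)%N) ?subn_eq0 // expr0 mulr1 => hB.
  apply: (le_trans (lerD hA hB)); rewrite -[X in X + _]mulr1 -mulrDr.
  apply: (le_trans hk); rewrite mulrC ler_wpM2l //.
  by rewrite -(subnK htn) exprD ler_piMl ?exprn_ge0 ?exprn_ile1.
- have hA0 : A <= 0 by move: hA; rewrite leqNgt htn.
  apply: (le_trans (lerD hA0 hB)); rewrite add0r.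
  have -> : theta ^+ t = theta ^+ (t - n) * theta ^+ n.
    by rewrite -exprD subnK // ltnW.
  have h1 : LR * Sp <= theta ^+ n * muR.
    by apply: le_trans hk; rewrite ler_wpM2l // lerDr.
  have ha : 0 <= theta ^+ (t - n) by rewrite exprn_ge0.
  have -> : LR * (Sp * theta ^+ (t - n)) = theta ^+ (t - n) * (LR * Sp) by ring.
  have -> : muR * (theta ^+ (t - n) * theta ^+ n) = theta ^+ (t - n) * (theta ^+ n * muR) by ring.
  by rewrite ler_wpM2l.
Qed.

Lemma main_seq N : forall (R : {set F}) (t : nat) (X : seq (seq {set F})),
  indep sim R -> uniq X ->
  (forall phi, phi \in X -> [/\ strongly_stable sim phi, R_of phi = R,
                              (t <= weight phi)%N & (size phi <= N)%N]) ->
  \sum_(phi <- X) lam_seq lam phi <= muS R * theta ^+ t.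
Proof.
elim: N => [|N IH] R t X indR uX HX.
  rewrite big1_seq ?mulr_ge0 ?exprn_ge0 ?mu0 // => phi /andP [_ /HX [[h0 _ _ _] _ _ hs]].
  by move: h0; rewrite leqn0 in hs; rewrite (eqP hs).
have Hcons : forall phi, phi \in X -> phi = R :: behead phi.
  by move=> [|a s] /HX [[h0 _ _ _] hR _ _] //; rewrite -hR.
set LR := \prod_(f in R) lam f.
have LR0 : 0 <= LR by apply: prodr_ge0.
rewrite (bigID (fun phi => size phi == 1%N)) /=.
apply: (@final_alg LR _ _ (\sum_(T : {set F} | indep sim T && (T \subset GamS sim R) && (T != S0)) muS T) _ _ #|R|).
- exact: LR0.
- exact: mu0.
- by apply: sumr_ge0 => T /andP [/andP [iT _] _]; apply: mu0.
-
  rewrite -big_filter.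
  set Y := [seq _ <- X | _].
  have HY : forall y, y \in Y -> y = [:: R] /\ (t <= #|R|)%N.
    move=> y; rewrite mem_filter => /andP [/eqP sy yX].
    have [_ _ ht _] := HX _ yX.
    have e := Hcons _ yX.
    case: y sy yX e ht => [|a [|b s]] //= _ yX [ea]; subst a.
    by rewrite weight_cons addn0.
  have uY : uniq Y by rewrite filter_uniq.
  case: Y HY uY => [|a [|b s]] HY uY.
  + by rewrite big_nil; case: ifP.
  + have [-> ->] := HY a (mem_head _ _).
    by rewrite big_cons big_nil addr0 lam_cons /lam_seq big_nil mulr1.
  + have [ea _] := HY a (mem_head _ _).
    have [eb _] := HY b (mem_behead (mem_head b s : b \in behead [:: a, b & s])).
    by move: uY; rewrite /= ea eb inE eqxx.
-
  have -> : \sum_(phi <- X | size phi != 1%N) lam_seq lam phi =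
            LR * \sum_(phi <- X | size phi != 1%N) lam_seq lam (behead phi).
    rewrite big_distrr /= big_seq_cond [RHS]big_seq_cond.
    by apply: eq_bigr => phi /andP [phiX _]; rewrite {1}(Hcons _ phiX) lam_cons.
  rewrite ler_wpM2l //.
  rewrite (@partition_seq _ _ X (fun phi => size phi != 1%N)
             (fun phi => nth S0 phi 1) (fun T => indep sim T && (T \subset GamS sim R))).
  + rewrite (bigD1 S0) /=; last first.
      by rewrite finset.sub0set andbT; apply/forallP => f; apply/implyP; rewrite finset.in_set0.
    rewrite big1_seq ?add0r; last first.
      move=> phi /andP [/andP [s1 /eqP e] phiX].
      have [[h0 _ _ hn] _ _ _] := HX _ phiX.
      have : (1 < size phi)%N by move: h0 s1; case: (size phi) => [|[|k]].
      by move=> /(conj (leqnn 1)) /andP /hn; rewrite e eqxx.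
    rewrite big_distrl /=; apply: ler_sum => T /andP [/andP [iT sT] nT].
    rewrite -big_filter -(big_map behead xpredT).
    apply: IH => //.
    * rewrite map_inj_in_uniq ?filter_uniq // => a b.
      rewrite !mem_filter => /andP [_ aX] /andP [_ bX] e.
      by rewrite (Hcons _ aX) (Hcons _ bX) e.
    * move=> psi /mapP [phi]; rewrite mem_filter => /andP [/andP [s1 /eqP e] phiX] ->.
      have [ss hR hw hs] := HX _ phiX.
      have s2 : (1 < size phi)%N.
        by case: ss => h0 _ _ _; move: h0 s1; case: (size phi) => [|[|k]].
      have ep := Hcons _ phiX.
      split.
      - rewrite ep in ss; apply: (ss_behead ss).
        by rewrite size_behead; move: s2; case: (size phi) => [|[|k]].
      - by rewrite /R_of -e; case: (phi) s2 => [|a [|b r]].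
      - by rewrite leq_subLR -weight_cons -ep.
      - by rewrite size_behead; move: hs; case: (size phi).
  + move=> phi phiX s1.
    have [[h0 hi hs _] hR _ _] := HX _ phiX.
    have s2 : (1 < size phi)%N by move: h0 s1; case: (size phi) => [|[|k]].
    rewrite hi //=; have := hs 0%N s2; rewrite -hR /R_of.
    by case: (phi) => [|a s].
- have := keyineq indR; rewrite (bigD1 S0) /= ?mu_empty //.
  by rewrite finset.sub0set andbT; apply/forallP => f; apply/implyP; rewrite finset.in_set0.
Qed.

End Main.
Section Esum.
Variables (F : finType) (sim : rel F) (Rl : realType) (lam : F -> Rl)
  (theta : Rl) (muS : {set F} -> Rl).
Hypotheses (lam0 : forall f, 0 <= lam f) (th0 : 0 <= theta) (th1 : theta <= 1)
  (mu_empty : muS (@finset.set0 F) = 1) (mu0 : forall T, indep sim T -> 0 <= muS T)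
  (keyineq : forall R, indep sim R ->
     \prod_(f in R) lam f *
       \sum_(T : {set F} | indep sim T && (T \subset GamS sim R)) muS T
     <= theta ^+ #|R| * muS R).

Lemma main_esum (R : {set F}) t : indep sim R ->
  (\esum_(phi in Stab sim R t) (lam_seq lam phi)%:E <= (muS R * theta ^+ t)%:E)%E.
Proof.
move=> indR; apply: ge_ereal_sup => _ [A [finA AS] <-].
rewrite fsbig_finite //= sumEFin lee_fin.
have := @main_seq F sim Rl lam theta muS lam0 th0 th1 mu_empty mu0 keyineq
          (\max_(phi <- finmap.enum_fset (fset_set A)) size phi) R t _ indR.
apply.
- exact: finmap.fset_uniq.
- move=> phi phiA.
  have Aphi : A phi by move: phiA; rewrite in_fset_set // inE.
  have [ss [hR hw]] := AS phi Aphi.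
  split => //; exact: (@leq_bigmax_seq _ _ xpredT).
Qed.
End Esum.


Section Sets.
Variables (F : finType) (sim : rel F).
Local Notation S0 := (@finset.set0 F).

Lemma indepP (S : {set F}) :
  reflect (forall f g, f \in S -> g \in S -> f != g -> ~~ sim f g) (indep sim S).
Proof.
apply: (iffP forallP) => [H f g fS gS fg|H f].
  by have /implyP /(_ fS) /forallP /(_ g) /implyP /(_ gS) /implyP /(_ fg) := H f.
apply/implyP => fS; apply/forallP => g; apply/implyP => gS; apply/implyP; exact: H.
Qed.

Lemma indep_sub (S T : {set F}) : indep sim S -> T \subset S -> indep sim T.
Proof.
move=> /indepP H /fintype.subsetP TS; apply/indepP => f g fT gT; apply: H; exact: TS.
Qed.

Lemma indep0 : indep sim S0.
Proof. by apply/indepP => f g; rewrite finset.in_set0. Qed.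

Lemma GamSP (R : {set F}) g : reflect (exists2 f, f \in R & sim f g) (g \in GamS sim R).
Proof.
apply: (iffP bigcupP) => [[f fR]|[f fR sfg]]; first by rewrite inE => h; exists f.
by exists f => //; rewrite inE.
Qed.

Lemma indepU (J R : {set F}) : symmetric_rel sim -> indep sim R ->
  [disjoint J & R] ->
  indep sim (J :|: R) = indep sim J && [disjoint J & GamS sim R].
Proof.
move=> symm /indepP iR dJR; apply/idP/andP => [/indepP H|[/indepP iJ dJG]].
  split.
    by apply/indepP => f g fJ gJ; apply: H; rewrite finset.in_setU ?fJ ?gJ.
  rewrite -finset.setI_eq0; apply/eqP/setP => g; rewrite !inE.
  apply/andP => -[gJ /GamSP [f fR sfg]].
  have fg : f != g by apply/eqP => e; move: dJR; rewrite -finset.setI_eq0 => /eqP /setP /(_ g);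
     rewrite !inE gJ -e fR.
  by move: (H f g); rewrite !finset.in_setU fR gJ orbT => /(_ isT isT fg); rewrite sfg.
apply/indepP => f g; rewrite !finset.in_setU => /orP [fJ|fR] /orP [gJ|gR] fg.
- exact: iJ.
- apply/negP => sfg; move: dJG; rewrite -finset.setI_eq0 => /eqP /setP /(_ f).
  by rewrite !inE fJ /=; move=> /negbT /negP; apply; apply/GamSP; exists g => //; rewrite symm.
- apply/negP => sfg; move: dJG; rewrite -finset.setI_eq0 => /eqP /setP /(_ g).
  by rewrite !inE gJ /=; move=> /negbT /negP; apply; apply/GamSP; exists f.
- exact: iR.
Qed.
End Sets.

Section Shearer.
Variables (F : finType) (sim : rel F) (Rl : realType) (p : F -> Rl).
Hypothesis symm : symmetric_rel sim.
Local Notation S0 := (@finset.set0 F).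
Local Notation pp S := (\prod_(f in S) p f).

Lemma disjU (J A B : {set F}) :
  [disjoint J & A :|: B] = [disjoint J & A] && [disjoint J & B].
Proof. by rewrite -!finset.setI_eq0 finset.setIUr finset.setU_eq0. Qed.

Lemma disjDl (A B : {set F}) : [disjoint A :\: B & B].
Proof. by rewrite -finset.setI_eq0; apply/eqP/setP => x; rewrite !inE; case: (x \in B); rewrite ?andbF. Qed.

Lemma alt_sum (S : {set F}) :
  \sum_(T : {set F} | T \subset S) (-1 : Rl) ^+ #|T| = (S == S0)%:R.
Proof.
case: (finset.set_0Vmem S) => [->|[x xS]].
  rewrite eqxx (big_pred1 S0) ?finset.cards0 ?expr0 // => T.
  by rewrite finset.subset0.
have nS : S != S0 by apply/finset.set0Pn; exists x.
rewrite (negbTE nS).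
pose h (T : {set F}) := if x \in T then T :\ x else x |: T.
have hK : involutive h.
  move=> T; rewrite /h; case: (boolP (x \in T)) => xT.
    by rewrite finset.setD11 /= finset.setD1K.
  by rewrite finset.setU11 /= finset.setU1K.
set s := (X in X = _).
suff e : s = - s by rewrite (_ : (false : nat)%:R = 0 :> Rl) //; move: e; lra.
rewrite {1}/s (reindex_inj (inv_inj hK)) /= -sumrN.
apply: eq_big => T.
  rewrite /h; case: ifP => xT.
    by rewrite -{2}(finset.setD1K xT) finset.subUset finset.sub1set xS.
  by rewrite finset.subUset finset.sub1set xS.
move=> _; rewrite /h; case: ifP => xT.
  by rewrite [in RHS](finset.cardsD1 x T) xT exprS mulN1r opprK.
by rewrite finset.cardsU1 xT exprS mulN1r.
Qed.

Lemma sign_sub (a b : nat) : (b <= a)%N ->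
  (-1 : Rl) ^+ (a - b) = (-1) ^+ a * (-1) ^+ b.
Proof.
move=> ba; rewrite -{2}(subnK ba) exprD -mulrA -expr2 sqrr_sign mulr1 //.
Qed.

Lemma sum_q (Y : {set F}) :
  \sum_(T : {set F} | indep sim T && (T \subset Y)) q sim p T =
  \sum_(J : {set F} | indep sim J && [disjoint J & Y]) (-1) ^+ #|J| * pp J.
Proof.
rewrite /q (exchange_big_dep (fun J : {set F} => indep sim J)) /=; last first.
  by move=> T J _ /andP [].
rewrite [RHS]big_mkcondr /=; apply: eq_bigr => J iJ.
transitivity (\sum_(T : {set F} | T \subset J :&: Y) ((-1) ^+ #|J| * pp J) * (-1) ^+ #|T|).
  apply: eq_big => T.
    rewrite finset.subsetI iJ /=; case: (boolP (T \subset J)) => TJ; rewrite ?andbF ?andbT //.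
    by rewrite (indep_sub iJ TJ).
  move=> /andP [_ /andP [_ TJ]]; rewrite sign_sub ?subset_leq_card //; ring.
by rewrite -big_distrr /= alt_sum finset.setI_eq0; case: ifP; rewrite ?mulr1 ?mulr0.
Qed.

Lemma q_indep (R : {set F}) : indep sim R ->
  q sim p R = pp R *
    \sum_(J : {set F} | indep sim J && [disjoint J & R :|: GamS sim R]) (-1) ^+ #|J| * pp J.
Proof.
move=> iR; rewrite /q big_distrr /=.
rewrite (reindex_onto (fun J => J :|: R) (fun J => J :\: R)) /=; last first.
  move=> J /andP [_ RJ]; apply/setP => x; rewrite !inE.
  by case: (boolP (x \in R)) => xR; rewrite ?orbT ?andbT ?orbF //= (fintype.subsetP RJ).
apply: eq_big => J.
  rewrite finset.subsetUr andbT disjU.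
  case: (boolP [disjoint J & R]) => dJR /=.
    rewrite indepU //.
    have -> : (J :|: R) :\: R == J.
      apply/eqP/setP => x; rewrite !inE; case: (boolP (x \in R)) => xR;
        rewrite ?andbF ?andbT ?orbF //=.
      by rewrite (fintype.disjointFl dJR xR).
    by rewrite andbT.
  rewrite andbF; apply/negbTE/negP => /andP [_ /eqP e]; move/negP: dJR; apply.
  by rewrite -e disjDl.
move=> /andP [_ /eqP e]; have dJR : [disjoint J & R] by rewrite -e disjDl.
rewrite finset.cardsU (finset.disjoint_setI0 dJR) finset.cards0 subn0 addnK.
have -> : pp (J :|: R) = pp J * pp R.
  by rewrite -bigU //; apply: eq_bigl => x; rewrite !inE.
ring.
Qed.

End Shearer.

Lemma key2 (F : finType) (sim : rel F) (Rl : realType) (p lam : F -> Rl) (theta : Rl) :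
  symmetric_rel sim -> (forall S, 0 <= q sim p S) -> (forall f, 0 <= lam f) ->
  (forall f, lam f <= theta * p f) ->
  forall R, indep sim R ->
  \prod_(f in R) lam f *
    \sum_(T : {set F} | indep sim T && (T \subset GamS sim R)) q sim p T
  <= theta ^+ #|R| * q sim p R.
Proof.
move=> symm q0 lam0 hl R iR.
have eZ := sum_q sim p (R :|: GamS sim R).
set Z := (X in _ = X) in eZ.
have Z0 : 0 <= Z by rewrite -eZ sumr_ge0.
have le1 : \sum_(T : {set F} | indep sim T && (T \subset GamS sim R)) q sim p T <=
           \sum_(T : {set F} | indep sim T && (T \subset R :|: GamS sim R)) q sim p T.
  rewrite [in X in _ <= X](bigID (fun T : {set F} => T \subset GamS sim R)) /=.
  have -> : \sum_(T : {set F} | indep sim T && (T \subset GamS sim R)) q sim p T =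
     \sum_(T : {set F} | indep sim T && (T \subset R :|: GamS sim R) && (T \subset GamS sim R)) q sim p T.
    apply: eq_bigl => T; case: (boolP (T \subset GamS sim R)) => TG; rewrite ?andbF ?andbT //.
    by rewrite (fintype.subset_trans TG (finset.subsetUr _ _)) andbT.
  by rewrite lerDl sumr_ge0.
rewrite (q_indep p symm iR) -/Z.
have LR0 : 0 <= \prod_(f in R) lam f by apply: prodr_ge0.
apply: le_trans (ler_wpM2l LR0 le1) _; rewrite eZ mulrA ler_wpM2r //.
rewrite -prodr_const -big_split /=; apply: ler_prod => f _.
by rewrite lam0 hl.
Qed.


Section Case1.
Variables (F : finType) (sim : rel F) (Rl : realType) (mu : F -> Rl).
Hypothesis mu0 : forall f, 0 < mu f.
Local Notation S0 := (@finset.set0 F).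

Definition G (A : {set F}) : Rl :=
  \sum_(T : {set F} | indep sim T && (T \subset A)) mu_prod mu T.

Lemma mu_prod_ge0 T : 0 <= mu_prod mu T.
Proof. by apply: prodr_ge0 => f _; apply: ltW. Qed.

Lemma G_ge0 A : 0 <= G A.
Proof. by apply: sumr_ge0 => T _; apply: mu_prod_ge0. Qed.

Lemma G0 : G S0 = 1.
Proof.
rewrite /G (big_pred1 S0); first by rewrite /mu_prod finset.big_set0.
move=> T.
rewrite finset.subset0 /=; case: (boolP (T == S0)) => [/eqP ->|nT]; last by rewrite andbF.
by rewrite indep0.
Qed.

Lemma G_U A B : G (A :|: B) <= G A * G B.
Proof.
rewrite /G.
have -> : \sum_(T : {set F} | indep sim T && (T \subset A :|: B)) mu_prod mu T =
   \sum_(T : {set F} | indep sim T && (T \subset A :|: B))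
                 mu_prod mu (T :&: A) * mu_prod mu (T :\: A).
  by apply: eq_bigr => T _; rewrite /mu_prod (finset.big_setID (A:=T) A).
rewrite (partition_big (fun T : {set F} => (T :&: A, T :\: A))
   (fun j : {set F} * {set F} => indep sim j.1 && (j.1 \subset A) &&
                                (indep sim j.2 && (j.2 \subset B)))) /=; last first.
  move=> T /andP [iT TAB]; apply/andP; split; apply/andP; split.
  - exact: indep_sub iT (finset.subsetIl _ _).
  - exact: finset.subsetIr.
  - exact: indep_sub iT (finset.subsetDl _ _).
  - apply/fintype.subsetP => x; rewrite !inE => /andP [xA xT].
    by move: (fintype.subsetP TAB x xT); rewrite !inE (negbTE xA).
rewrite big_distrl /=.
under [X in _ <= X]eq_bigr do rewrite big_distrr /=.
rewrite [in X in _ <= X]pair_big_dep /=.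
apply: ler_sum => -[T1 T2] /= _.
apply: (@le_trans _ _ (\sum_(T : {set F} | T == T1 :|: T2) mu_prod mu T1 * mu_prod mu T2)).
  rewrite [X in _ <= X]big_mkcond [X in X <= _]big_mkcond /=.
  apply: ler_sum => T _.
  case: (boolP (_ && _)) => [/andP [_ /eqP [e1 e2]]|_].
    have -> : T == T1 :|: T2.
      apply/eqP; rewrite -e1 -e2; apply/setP => x; rewrite !inE.
      by case: (x \in A); rewrite ?andbT ?andbF ?orbF.
    by rewrite e1 e2.
  by case: ifP => _ //; rewrite mulr_ge0 ?mu_prod_ge0.
by rewrite (big_pred1 (T1 :|: T2)).
Qed.

Lemma G_S (R : {set F}) : G (GamS sim R) <= \prod_(f in R) G (Gam sim f).
Proof.
rewrite /GamS.
apply: (big_rec2 (fun X y => G X <= y)); first by rewrite G0.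
move=> f X y _ hX.
apply: le_trans (G_U _ _) _.
by rewrite ler_wpM2l ?G_ge0.
Qed.

Lemma key1 (lam : F -> Rl) (theta : Rl) :
  (forall f, 0 <= lam f) ->
  (forall f, lam f / mu f *
         (\sum_(S : {set F} | (S \subset Gam sim f) && indep sim S) mu_prod mu S)
         <= theta) ->
  forall R, indep sim R ->
  \prod_(f in R) lam f *
    \sum_(T : {set F} | indep sim T && (T \subset GamS sim R)) mu_prod mu T
  <= theta ^+ #|R| * mu_prod mu R.
Proof.
move=> lam0 hc R _.
have LR0 : 0 <= \prod_(f in R) lam f by apply: prodr_ge0.
apply: le_trans (ler_wpM2l LR0 (G_S R)) _.
rewrite -big_split /= /mu_prod -prodr_const -big_split /=.
apply: ler_prod => f _; rewrite mulr_ge0 ?G_ge0 //=.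
have := hc f; rewrite (eq_bigl (fun S => indep sim S && (S \subset Gam sim f))); last first.
  by move=> S; rewrite andbC.
rewrite -/(G (Gam sim f)) mulrAC ler_pdivrMr // mulrC.
Qed.
End Case1.

Theorem theorem7 (F : finType) (sim : rel F) (Rl : realType)
    (lam : F -> Rl) (theta : Rl) (muS : {set F} -> Rl) :
  symmetric_rel sim ->
  ((exists mu : F -> Rl,
      case1 sim lam mu theta /\ muS = mu_prod mu) \/
   (exists (Omega : finType) (fl : F -> {set Omega})
           (rho : F -> Omega -> Omega -> Rl) (omega : Omega -> Rl) (p : F -> Rl),
      shearer sim fl rho omega p lam theta /\
      muS = (fun R => q sim p R / q sim p (@finset.set0 F)))) ->
  forall (R : {set F}) (t : nat), indep sim R ->
    (\esum_(phi in Stab sim R t) (lam_seq lam phi)%:E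
       <= (muS R * theta ^+ t)%:E)%E.
Proof.
move=> symm hyp R t iR.
case: hyp => [[mu [[/andP [th0 th1] lam0 mu0 hc] ->]] |
   [Om [fl [rho [om [p [[[_ hfl] hrho [hom _] [q0 q0pos] [hl [/andP [th0 th1] hlp]]] ->]]]]]]].
  apply: (@main_esum F sim Rl lam theta (mu_prod mu)) => //.
  - exact: ltW.
  - exact: ltW.
  - by rewrite /mu_prod finset.big_set0.
  - by move=> T _; apply: mu_prod_ge0.
  - exact: key1.
have lam0 : forall f, 0 <= lam f.
  move=> f; have /finset.set0Pn [s' _] := hfl f.
  apply: le_trans (hl f s'); apply: sumr_ge0 => s /andP [_ hr].
  by rewrite divr_ge0 ?mulr_ge0 ?ltW.
apply: (@main_esum F sim Rl lam theta (fun R => q sim p R / q sim p (@finset.set0 F))) => //.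
- exact: ltW.
- exact: ltW.
- by rewrite divff // gt_eqF.
- by move=> T _; rewrite divr_ge0 ?q0 ?ltW.
- move=> S iS; rewrite -mulr_suml mulrA [X in _ <= X]mulrA.
  have hk := key2 symm q0 lam0 hlp iS.
  by rewrite ler_wpM2r // invr_ge0 ltW.
Qed.
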